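(* Let $(S,\sqsubseteq)$ be an ordinary poset. Then $(`S,`\!\sqsubseteq)$ is a quantum cpo if and only if $(S,\sqsubseteq)$ is an $\omega$-cpo (every increasing sequence has a least upper bound). Moreover, the functor $`(-):\mathbf{CPO}\to\mathbf{qCPO}$, sending $(S,\sqsubseteq)$ to $(`S,`\!\sqsubseteq)$ and a Scott continuous map $f$ to $`f$, is well defined and fully faithful.
   Context: A quantum set $\mathcal X$ is a set $\mathrm{At}(\mathcal X)$ of nonzero finite-dimensional Hilbert spaces (atoms). A relation $R$ from $\mathcal X$ to $\mathcal Y$ is a choice of subspaces $R(X,Y)\subseteq L(X,Y)$ for all atoms. Composition: $(S\circ R)(X,Z)=\mathrm{span}\{sr: r\in R(X,Y), s\in S(Y,Z), Y\in\mathrm{At}(\mathcal Y)\}$; identity $I_{\mathcal X}(X,X)=\mathbb C 1_X$ and $0$ off the diagonal; adjoint $R^\dagger(Y,X)=\{r^\dagger: r\in R(X,Y)\}$; $R\le S$ entrywise inclusion; $\bigwedge$ entrywise intersection. A function $F:\mathcal X\to\mathcal Y$ is a relation with $F\circ F^\dagger\le I_{\mathcal Y}$ and $F^\dagger\circ F\ge I_{\mathcal X}$. A quantum poset is $(\mathcal X,R)$ with $I_{\mathcal X}\le R$, $R\circ R\le R$, $R\wedge R^\dagger\le I_{\mathcal X}$. For functions $F,G:\mathcal W\to\mathcal X$, $F\sqsubseteq G$ means $G\le R\circ F$. For an increasing sequence $K_1\sqsubseteq K_2\sqsubseteq\cdots:\mathcal W\to\mathcal X$, write $K_n\nearrow K_\infty$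 if $K_\infty:\mathcal W\to\mathcal X$ is a function with $R\circ K_\infty=\bigwedge_{n}R\circ K_n$. $\mathbf H_d$ denotes the quantum set whose single atom is $H_d=\mathbb C^d$. A quantum poset $(\mathcal X,R)$ is a quantum cpo if for every $d\ge 1$ and every increasing sequence $K_1\sqsubseteq K_2\sqsubseteq\cdots:\mathbf H_d\to\mathcal X$ there is $K_\infty:\mathbf H_d\to\mathcal X$ with $K_n\nearrow K_\infty$. A function $F:\mathcal X\to\mathcal Y$ between quantum cpos is Scott continuous if for every $d\ge1$ and functions $K_i:\mathbf H_d\to\mathcal X$ ($i\in\mathbb N\cup\{\infty\}$), $K_n\nearrow K_\infty$ implies $F\circ K_n\nearrow F\circ K_\infty$; $\mathbf{qCPO}$ is the category of quantum cpos and Scott continuous functions. $\mathbf{CPO}$ is the category of $\omega$-cpos and Scott continuous maps. For an ordinary set $S$, $`S$ is the quantum set with one atom $\mathbb C_s$ ($\cong\mathbb C$) per $s\in S$; an ordinary relation $r\subseteq S\times T$ (e.g. an order or the graph of a function) gives $`r$ with $`r(\mathbb C_s,\mathbb C_t)=L(\mathbb C_s,\mathbb C_t)$ if $(s,t)\in r$ and $0$ otherwise. *)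

(* Defs.v *)
(* Quantum sets / quantum posets / quantum cpos
   (Kornell-Lindenhovius-Mislove style), over a field C of "complex numbers"
   (an arbitrary numClosedFieldType, which includes the complex numbers). *)
From HB Require Import structures.
From mathcomp Require Import all_boot all_order all_algebra.
Unset Printing Implicit Defensive.
Import GRing.Theory Num.Theory.
Local Open Scope ring_scope.


(* A quantum set: an index set of atoms, each atom being the Hilbert space
   C^(qdim i), which is nonzero. *)
Record qset (C : numClosedFieldType) := QSet {
  qatom : Type;
  qdim : qatom -> nat;
  qdim_gt0 : forall i, (0 < qdim i)%N
}.
Arguments qatom {C} _.
Arguments qdim {C} _ _.
Arguments qdim_gt0 {C} _ _.

(* L(X_i, Y_j) is represented by matrices acting on column vectors. *)
Definition qrel {C : numClosedFieldType} (X Y : qset C) :=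
  forall (i : qatom X) (j : qatom Y), 'M[C]_(qdim Y j, qdim X i) -> Prop.

Definition is_subspace {C : numClosedFieldType} {m n} (V : 'M[C]_(m, n) -> Prop) :=
  V 0 /\ (forall a u v, V u -> V v -> V (a *: u + v)).

Definition is_qrel {C : numClosedFieldType} {X Y : qset C} (R : qrel X Y) := forall i j, is_subspace (R i j).

Definition qle {C : numClosedFieldType} {X Y : qset C} (R S : qrel X Y) := forall i j m, R i j m -> S i j m.
Definition qeq {C : numClosedFieldType} {X Y : qset C} (R S : qrel X Y) := qle R S /\ qle S R.

Definition qcomp {C : numClosedFieldType} {X Y Z : qset C} (S : qrel Y Z) (R : qrel X Y) : qrel X Z :=
  fun i k m => exists (n : nat) (js : 'I_n -> qatom Y)
    (rs : forall t, 'M[C]_(qdim Y (js t), qdim X i))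
    (ss : forall t, 'M[C]_(qdim Z k, qdim Y (js t))),
    (forall t, R i (js t) (rs t)) /\ (forall t, S (js t) k (ss t)) /\
    m = \sum_(t < n) (ss t *m rs t).

Definition qid {C : numClosedFieldType} (X : qset C) : qrel X X :=
  fun i j m => m = 0 \/
    exists (e : i = j) (c : C),
      m = eq_rect i (fun j' => 'M[C]_(qdim X j', qdim X i)) (c%:M) j e.

Definition hadj {C : numClosedFieldType} {m n} (M : 'M[C]_(m, n)) : 'M[C]_(n, m) := (map_mx Num.conj M)^T.

Definition qadj {C : numClosedFieldType} {X Y : qset C} (R : qrel X Y) : qrel Y X := fun j i m => R i j (hadj m).

Definition qmeet {C : numClosedFieldType} {X Y : qset C} (Rs : nat -> qrel X Y) : qrel X Y :=
  fun i j m => forall n, Rs n i j m.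

Definition qmeet2 {C : numClosedFieldType} {X Y : qset C} (R S : qrel X Y) : qrel X Y :=
  fun i j m => R i j m /\ S i j m.

Definition qfun {C : numClosedFieldType} {X Y : qset C} (F : qrel X Y) :=
  is_qrel F /\ qle (qcomp F (qadj F)) (qid Y) /\ qle (qid X) (qcomp (qadj F) F).

Definition qposet {C : numClosedFieldType} {X : qset C} (R : qrel X X) :=
  is_qrel R /\ qle (qid X) R /\ qle (qcomp R R) R /\ qle (qmeet2 R (qadj R)) (qid X).

Definition qsqle {C : numClosedFieldType} {W X : qset C} (R : qrel X X) (F G : qrel W X) := qle G (qcomp R F).

Definition qincreasing {C : numClosedFieldType} {W X : qset C} (R : qrel X X) (K : nat -> qrel W X) :=
  (forall n, qfun (K n)) /\ (forall n, qsqle R (K n) (K n.+1)).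

Definition qsup {C : numClosedFieldType} {W X : qset C} (R : qrel X X) (K : nat -> qrel W X) (Kinf : qrel W X) :=
  qincreasing R K /\ qfun Kinf /\
  qeq (qcomp R Kinf) (qmeet (fun n => qcomp R (K n))).

Definition qH (C : numClosedFieldType) (d : nat) : qset C :=
  @QSet C unit (fun _ => d.-1.+1) (fun _ => isT).

Definition qcpo {C : numClosedFieldType} {X : qset C} (R : qrel X X) :=
  qposet R /\
  forall d : nat, (0 < d)%N ->
    forall K : nat -> qrel (qH C d) X, qincreasing R K ->
      exists Kinf, qsup R K Kinf.

Definition qscott {C : numClosedFieldType} {X Y : qset C} (RX : qrel X X) (RY : qrel Y Y) (F : qrel X Y) :=
  qfun F /\
  forall d : nat, (0 < d)%N ->
    forall (K : nat -> qrel (qH C d) X) (Kinf : qrel (qH C d) X),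
      qsup RX K Kinf -> qsup RY (fun n => qcomp F (K n)) (qcomp F Kinf).

Definition qclassical (C : numClosedFieldType) (S : Type) : qset C := @QSet C S (fun _ => 1%N) (fun _ => isT).

Definition qcrel (C : numClosedFieldType) {S T : Type} (r : S -> T -> Prop) : qrel (qclassical C S) (qclassical C T) :=
  fun s t m => r s t \/ m = 0.

Definition graph {S T : Type} (f : S -> T) : S -> T -> Prop := fun s t => f s = t.

Definition is_poset {S : Type} (le : S -> S -> Prop) :=
  (forall x, le x x) /\ (forall x y z, le x y -> le y z -> le x z) /\
  (forall x y, le x y -> le y x -> x = y).

Definition increasing_seq {S : Type} (le : S -> S -> Prop) (s : nat -> S) :=
  forall n, le (s n) (s n.+1).

Definition is_lub {S : Type} (le : S -> S -> Prop) (s : nat -> S) (x : S) :=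
  (forall n, le (s n) x) /\ (forall y, (forall n, le (s n) y) -> le x y).

Definition omega_cpo {S : Type} (le : S -> S -> Prop) :=
  is_poset le /\
  forall s, increasing_seq le s -> exists x, is_lub le s x.

Definition scott_continuous {S T : Type} (leS : S -> S -> Prop) (leT : T -> T -> Prop)
  (f : S -> T) :=
  (forall x y, leS x y -> leT (f x) (f y)) /\
  forall s x, increasing_seq leS s -> is_lub leS s x -> is_lub leT (fun n => f (s n)) (f x).

(* Main.v *)
Require Import Defs.
From mathcomp Require Import all_boot all_order all_algebra.
From Stdlib Require Import ClassicalEpsilon Classical FunctionalExtensionality.
Import GRing.Theory Num.Theory.
Local Open Scope ring_scope.
Set Implicit Arguments. Unset Strict Implicit.

Definition pb (P : Prop) : bool := if excluded_middle_informative P then true else false.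
Lemma pbP (P : Prop) : reflect P (pb P).
Proof. rewrite /pb; case: excluded_middle_informative => h; by constructor. Qed.
Lemma pbT (P : Prop) : P -> pb P = true.
Proof. by move=> h; apply/pbP. Qed.
Lemma pbF (P : Prop) : ~ P -> pb P = false.
Proof. by move=> h; apply/pbP. Qed.

Lemma eq_rect_const (A B : Type) (x y : A) (b : B) (e : x = y) :
  eq_rect x (fun _ => B) b y e = b.
Proof. by destruct e. Qed.

Section Basics.
Variable C : numClosedFieldType.

Lemma hadjM m n p (A : 'M[C]_(m,n)) (B : 'M[C]_(n,p)) : hadj (A *m B) = hadj B *m hadj A.
Proof. by rewrite /hadj map_mxM trmx_mul. Qed.
Lemma hadjK m n (A : 'M[C]_(m,n)) : hadj (hadj A) = A.
Proof. by rewrite /hadj map_trmx trmxK; apply/matrixP=> i j; rewrite !mxE conjCK. Qed.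
Lemma hadj1 n : hadj (1%:M : 'M[C]_n) = 1%:M.
Proof. by rewrite /hadj map_mx1 trmx1. Qed.
Lemma hadjD m n (A B : 'M[C]_(m,n)) : hadj (A + B) = hadj A + hadj B.
Proof. by rewrite /hadj map_mxD linearD. Qed.
Lemma hadj0 m n : hadj (0 : 'M[C]_(m,n)) = 0.
Proof. by apply/matrixP=> i j; rewrite !mxE conjC0. Qed.
Lemma hadjB m n (A B : 'M[C]_(m,n)) : hadj (A - B) = hadj A - hadj B.
Proof. by apply/matrixP=> i j; rewrite !mxE rmorphB. Qed.
Lemma hadjZ m n c (A : 'M[C]_(m,n)) : hadj (c *: A) = c^* *: hadj A.
Proof. by apply/matrixP=> i j; rewrite !mxE rmorphM. Qed.
Lemma hadj_sum m n (I : Type) (r : seq I) (P : pred I) (F : I -> 'M[C]_(m,n)) :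
  hadj (\sum_(i <- r | P i) F i) = \sum_(i <- r | P i) hadj (F i).
Proof.
elim/big_rec2: _ => [|i x y _ <-]; first by rewrite hadj0.
by rewrite hadjD.
Qed.
Lemma hadj_eq0 m n (A : 'M[C]_(m,n)) : hadj A = 0 -> A = 0.
Proof. by move=> h; rewrite -[A]hadjK h hadj0. Qed.

Lemma mx11_mul n (c : 'M[C]_1) (v : 'M[C]_(1,n)) : c *m v = c 0 0 *: v.
Proof. by rewrite {1}[c]mx11_scalar mul_scalar_mx. Qed.

Lemma rv_norm0 k (u : 'rV[C]_k) : u *m hadj u = 0 -> u = 0.
Proof.
move=> /matrixP /(_ 0 0); rewrite !mxE => h.
have h2 : forall j, true -> u 0 j * (u 0 j)^* = 0.
  apply: psumr_eq0P => [j _|]; first exact: mul_conjC_ge0.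
  rewrite -[in RHS]h; by apply: eq_bigr => j _; rewrite !mxE.
apply/matrixP => i j; rewrite (ord1 i) mxE; apply/eqP; rewrite -mul_conjC_eq0; apply/eqP.
exact: h2.
Qed.

Lemma hadj_mul_sum k (Q : 'M[C]_k) :
  hadj Q *m Q = \sum_(i < k) hadj (row i Q) *m row i Q.
Proof.
apply/matrixP=> x y; rewrite !mxE summxE; apply: eq_bigr => i _.
by rewrite !mxE big_ord1 !mxE.
Qed.

Definition sumP m n (P : 'M[C]_(m,n) -> Prop) (x : 'M[C]_(m,n)) :=
  exists N (f : 'I_N -> 'M[C]_(m,n)), (forall i, P (f i)) /\ x = \sum_i f i.

Lemma sumP0 m n (P : 'M[C]_(m,n) -> Prop) : sumP P 0.
Proof. by exists 0%N, (fun _ => 0); split; [case|rewrite big_ord0]. Qed.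

Lemma sumP1 m n (P : 'M[C]_(m,n) -> Prop) x : P x -> sumP P x.
Proof. by move=> h; exists 1%N, (fun _ => x); split=> //; rewrite big_ord1. Qed.

Lemma sumPD m n (P : 'M[C]_(m,n) -> Prop) x y : sumP P x -> sumP P y -> sumP P (x + y).
Proof.
move=> [N1 [f1 [h1 ->]]] [N2 [f2 [h2 ->]]].
exists (N1 + N2)%N, (fun i => match split i with inl a => f1 a | inr b => f2 b end).
split=> [i|]; first by case: (split i).
rewrite big_split_ord /=; congr (_ + _); apply: eq_bigr => i _.
  by rewrite (unsplitK (inl i : _ + 'I_N2)).
by rewrite (unsplitK (inr i : 'I_N1 + _)).
Qed.

Lemma sumP_big m n (P : 'M[C]_(m,n) -> Prop) (I : Type) (r : seq I) (Q : pred I) F :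
  (forall i, Q i -> sumP P (F i)) -> sumP P (\sum_(i <- r | Q i) F i).
Proof.
move=> h; elim/big_rec: _ => [|i x Qi hx]; first exact: sumP0.
exact: sumPD (h i Qi) hx.
Qed.

Lemma sumP_closed m n (P : 'M[C]_(m,n) -> Prop) x :
  P 0 -> (forall u v, P u -> P v -> P (u + v)) -> sumP P x -> P x.
Proof.
move=> h0 hD [N [f [hf ->]]]; elim/big_rec: _ => // i y _ hy; exact: hD.
Qed.

Lemma sumP_mono m n (P Q : 'M[C]_(m,n) -> Prop) x :
  (forall y, P y -> Q y) -> sumP P x -> sumP Q x.
Proof. by move=> h [N [f [hf ->]]]; exists N, f; split=> // i; apply: h. Qed.

Lemma sumP_flat m n (P : 'M[C]_(m,n) -> Prop) x : sumP (sumP P) x -> sumP P x.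
Proof. by move=> [N [f [hf ->]]]; apply: sumP_big => i _; apply: hf. Qed.

Lemma sumP_drop0 m n (P : 'M[C]_(m,n) -> Prop) x :
  sumP (fun u => u = 0 \/ P u) x -> sumP P x.
Proof.
move=> h; apply: sumP_flat; apply: sumP_mono h => y [->|]; [exact: sumP0|exact: sumP1].
Qed.

Lemma subspace_sumP m n (V : 'M[C]_(m,n) -> Prop) x : is_subspace V -> sumP V x -> V x.
Proof.
move=> [h0 hD]; apply: sumP_closed => // u v hu hv.
by have := hD 1 u v hu hv; rewrite scale1r.
Qed.

Lemma subspaceZ m n (V : 'M[C]_(m,n) -> Prop) c x : is_subspace V -> V x -> V (c *: x).
Proof. by move=> [h0 hD] hx; have := hD c x 0 hx h0; rewrite addr0. Qed.

Lemma sumP_subspace m n (P : 'M[C]_(m,n) -> Prop) :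
  (forall c x, P x -> P (c *: x)) -> is_subspace (sumP P).
Proof.
move=> hZ; split; first exact: sumP0.
move=> c u v [N [f [hf ->]]] hv; apply: sumPD hv.
rewrite scaler_sumr; apply: sumP_big => i _; apply: sumP1; exact: hZ.
Qed.

Lemma qcompE (X Y Z : qset C) (S : qrel Y Z) (R : qrel X Y) i k m :
  qcomp S R i k m <-> sumP (fun x => exists j r s, R i j r /\ S j k s /\ x = s *m r) m.
Proof.
split.
  move=> [N [js [rs [ss [hR [hS ->]]]]]]; apply: sumP_big => t _; apply: sumP1.
  by exists (js t), (rs t), (ss t).
move=> [N [f [hf ->]]].
pose g t := constructive_indefinite_description _ (hf t).
pose js t := proj1_sig (g t).
pose g2 t := constructive_indefinite_description _ (proj2_sig (g t)).
pose rs t := proj1_sig (g2 t).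
pose g3 t := constructive_indefinite_description _ (proj2_sig (g2 t)).
exists N, js, rs, (fun t => proj1_sig (g3 t)).
split; [|split].
- by move=> t; case: (proj2_sig (g3 t)).
- by move=> t; case: (proj2_sig (g3 t)) => _ [].
- by apply: eq_bigr => t _; case: (proj2_sig (g3 t)) => _ [].
Qed.

End Basics.
Section Vfun.
Variable C : numClosedFieldType.

Definition spanP (S : Type) k (K : S -> 'rV[C]_k -> Prop) (D : S -> Prop) :=
  sumP (fun u => exists s, D s /\ K s u).
Definition orthK (S : Type) k (K : S -> 'rV[C]_k -> Prop) :=
  forall s s' a b, s <> s' -> K s a -> K s' b -> b *m hadj a = 0.
Definition frameP (S : Type) k (K : S -> 'rV[C]_k -> Prop) (M : 'M[C]_k) :=
  sumP (fun X => exists s a b, K s a /\ K s b /\ X = hadj a *m b) M.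
Definition subK (S : Type) k (K : S -> 'rV[C]_k -> Prop) := forall s, is_subspace (K s).

Lemma qcomp_crel (S T : Type) (r : S -> T -> Prop) d
  (K : qrel (qH C d) (qclassical C S)) (t : T) (v : 'rV[C]_(d.-1.+1)) :
  is_qrel K -> (qcomp (qcrel C r) K tt t v <-> spanP (K tt) (fun s => r s t) v).
Proof.
move=> Ksub; rewrite qcompE; split.
  move=> h; apply: sumP_drop0; apply: sumP_mono h => x [j [rr [ss [hK [hr ->]]]]].
  case: hr => [hr|->]; last by left; rewrite mul0mx.
  right; exists j; split=> //; rewrite mx11_mul; apply: subspaceZ => //; exact: Ksub.
apply: sumP_mono => x [s [hD hK]]; exists s, x, 1%:M; split=> //; split; first by left.
by rewrite mul1mx.
Qed.

Lemma qfunE d (S : Type) (K : qrel (qH C d) (qclassical C S)) :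
  qfun K <-> is_qrel K /\ orthK (K tt) /\ frameP (K tt) 1%:M.
Proof.
split.
  move=> [Ksub [h1 h2]]; split=> //; split.
    move=> s s' a b ss' ha hb.
    have : qcomp K (qadj K) s s' (b *m hadj a).
      apply/qcompE; apply: sumP1; exists tt, (hadj a), b; split=> //.
      by rewrite /qadj hadjK.
    move=> /h1 [h|[e _]]; [exact: h|by case: ss'].
  have : qid (qH C d) tt tt 1%:M by right; exists erefl, 1.
  move=> /h2 /qcompE; apply: sumP_mono => x [j [rr [ss [hr [hs ->]]]]].
  exists j, (hadj ss), rr; split=> //; split=> //; by rewrite hadjK.
move=> [Ksub [horth hfr]]; split=> //; split.
  move=> s s' m /qcompE hm.
  case: (classic (s = s')) => [es|ns].
    subst s'; right; exists erefl, (m 0 0); exact: mx11_scalar.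
  left; apply: (@sumP_closed _ _ _ (fun x => x = 0)) => //.
    by move=> u v -> ->; rewrite addr0.
  apply: sumP_mono hm => x [[] [rr [ss [hr [hs ->]]]]].
  rewrite -[rr]hadjK; apply: (horth s s') => //; exact: hr.
case=> [] [] m [->|[e [c ->]]]; first by apply/qcompE; exact: sumP0.
rewrite (eq_axiomK e) /=; apply/qcompE.
have -> : (c%:M : 'M[C]_(d.-1.+1)) = c *: 1%:M by rewrite scalemx1.
move: hfr => [N [f [hf ->]]]; rewrite scaler_sumr; apply: sumP_big => i _.
have [s [a [b [ha [hb ->]]]]] := hf i; apply: sumP1.
exists s, (c *: b), (hadj a); split; first by apply: subspaceZ => //; exact: Ksub.
split; first by rewrite /qadj hadjK.
by rewrite scalemxAr.
Qed.

End Vfun.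
Section Frame.
Variable C : numClosedFieldType.
Variables (S : Type) (k : nat) (K : S -> 'rV[C]_k -> Prop).

Lemma span_ext D p (u : 'rV[C]_k) (P Q : 'M[C]_(k,p)) :
  spanP K D u -> (forall s x, D s -> K s x -> x *m P = x *m Q) -> u *m P = u *m Q.
Proof.
move=> hu h; apply: (@sumP_closed _ _ _ (fun x : 'rV[C]_k => x *m P = x *m Q)).
- by rewrite !mul0mx.
- by move=> x y /= hx hy; rewrite !mulmxDl hx hy.
- by apply: sumP_mono hu => x [s [hD hK]]; apply: h hK.
Qed.

Hypothesis Ksub : subK K.
Hypothesis Korth : orthK K.
Variables (n : nat) (js : 'I_n -> S) (a b : 'I_n -> 'rV[C]_k).
Hypotheses (Ha : forall i, K (js i) (a i)) (Hb : forall i, K (js i) (b i)).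
Hypothesis H1 : \sum_i hadj (a i) *m b i = 1%:M.

Definition Pi (D : S -> Prop) : 'M[C]_k := \sum_(i | pb (D (js i))) hadj (a i) *m b i.

Lemma Pi_ext D D' : (forall s, D s <-> D' s) -> Pi D = Pi D'.
Proof.
move=> h; apply: eq_bigl => i.
by case: pbP => h1; case: pbP => h2 //; exfalso; [apply: h2; apply/h|apply: h1; apply/h].
Qed.

Lemma PiT : Pi (fun _ => True) = 1%:M.
Proof. by rewrite -H1; apply: eq_bigl => i; rewrite pbT. Qed.

Lemma PiF : Pi (fun _ => False) = 0.
Proof. by rewrite /Pi big_pred0 // => i; rewrite pbF. Qed.

Lemma vPi s (v : 'rV[C]_k) D : K s v -> v *m Pi D = if pb (D s) then v else 0.
Proof.
move=> hv.
have hT : forall i, js i <> s -> v *m hadj (a i) = 0.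
  by move=> i hi; apply: (Korth hi) => //; exact: Ha.
have ev : v = \sum_i (v *m hadj (a i)) *m b i.
  by rewrite -{1}[v]mulmx1 -H1 mulmx_sumr; apply: eq_bigr => i _; rewrite mulmxA.
rewrite /Pi mulmx_sumr big_mkcond /=.
transitivity (\sum_i (if pb (D s) then (v *m hadj (a i)) *m b i else 0)).
  apply: eq_bigr => i _; case: (classic (js i = s)) => [e|hi].
    by rewrite e; case: (pb (D s)) => //; rewrite mulmxA.
  by rewrite mulmxA hT // mul0mx !if_same.
by case: ifP => _; [rewrite -ev|rewrite big1].
Qed.

Lemma PiM D D' : Pi D *m Pi D' = Pi (fun s => D s /\ D' s).
Proof.
rewrite /Pi mulmx_suml [RHS]big_mkcond [LHS]big_mkcond /=.
apply: eq_bigr => i _; rewrite -mulmxA (vPi _ (Hb i)).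
case: (pbP (D (js i))) => h1; case: (pbP (D' (js i))) => h2.
- by rewrite pbT.
- by rewrite mulmx0 pbF // => -[].
- by rewrite pbF // => -[].
- by rewrite pbF // => -[].
Qed.

Lemma PiI D : Pi D *m Pi D = Pi D.
Proof. by rewrite PiM; apply: Pi_ext => s; split=> [[]|]. Qed.

Lemma PiH D : hadj (Pi D) = Pi D.
Proof.
have e1 : hadj (Pi D) = hadj (Pi D) *m Pi D.
  rewrite /Pi hadj_sum mulmx_suml; apply: eq_bigr => i hi.
  by rewrite hadjM hadjK -mulmxA (vPi _ (Ha i)) hi.
have e2 : Pi D = hadj (Pi D) *m Pi D.
  by rewrite -{1}[Pi D]hadjK e1 hadjM hadjK -mulmxA PiI.
by rewrite {1}e1 -e2.
Qed.

Lemma PiC D : Pi D + Pi (fun s => ~ D s) = 1%:M.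
Proof.
rewrite -PiT /Pi [in RHS](bigID (fun i => pb (D (js i)))) /=; congr (_ + _).
  by apply: eq_bigl => i; rewrite (@pbT True I).
apply: eq_bigl => i; rewrite (@pbT True I) /=.
case: (pbP (D (js i))) => h /=; first by rewrite pbF // => nh; apply: nh.
by rewrite pbT.
Qed.

Lemma Pi_group D (v : 'rV[C]_k) :
  (forall s, D s -> v *m Pi (fun s' => s' = s) = 0) -> v *m Pi D = 0.
Proof.
move=> h; rewrite /Pi mulmx_sumr big1 // => i /pbP hi.
have -> : a i = a i *m Pi (fun s' => s' = js i) by rewrite (vPi _ (Ha i)) pbT.
by rewrite hadjM PiH !mulmxA h // !mul0mx.
Qed.

Lemma Pi_span D (v : 'rV[C]_k) : v *m Pi D = v <-> spanP K D v.
Proof.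
split.
  move=> <-; rewrite /Pi mulmx_sumr; apply: sumP_big => i /pbP hi; apply: sumP1.
  exists (js i); split=> //; rewrite mulmxA mx11_mul; apply: subspaceZ => //; exact: Ksub.
move=> hv; rewrite -[RHS]mulmx1; apply: (@span_ext D k v (Pi D) 1%:M hv) => s x hD hK.
by rewrite mulmx1 (vPi _ hK) pbT.
Qed.

End Frame.
Lemma nat_stab (r : nat -> nat) : (forall n, (r n.+1 <= r n)%N) ->
  exists N, forall n, (N <= n)%N -> r n = r N.
Proof.
move: {2}(r 0%N) (leqnn (r 0%N)) => b; elim: b r => [|b IH] r hb hr.
  exists 0%N => n _; have h : forall m, (r m <= r 0%N)%N.
    by elim=> // m ih; apply: leq_trans (hr m) ih.
  by apply/eqP; rewrite eqn_leq h /= (leq_trans hb).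
have h : forall m, (r m <= r 0%N)%N.
  by elim=> // m ih; apply: leq_trans (hr m) ih.
case: (classic (exists n, r n <> r 0%N)) => [[n hn]|hn]; last first.
  exists 0%N => m _; apply: NNPP => hm; apply: hn; by exists m.
have lt : (r n < r 0%N)%N by rewrite ltn_neqAle h andbT; apply/eqP.
have hr' : forall m, (r (n + m.+1)%N <= r (n + m)%N)%N.
  by move=> m; rewrite addnS; exact: hr.
have hb' : (r (n + 0)%N <= b)%N by rewrite addn0 -ltnS (leq_trans lt hb).
have [N hN] := IH (fun m => r (n + m)%N) hb' hr'.
exists (n + N)%N => m hm; rewrite -(subnKC (leq_trans (leq_addr N n) hm)).
by apply: hN; rewrite -(leq_add2l n) subnKC // (leq_trans (leq_addr N n) hm).
Qed.

Section DC.
Variables (T : Type) (Q : nat -> T -> Prop) (R : T -> T -> Prop).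
Hypothesis h0 : exists s, Q 0%N s.
Hypothesis h1 : forall n s, Q n s -> exists t, R s t /\ Q n.+1 t.
Definition dc_step n (x : {s | Q n s}) : {s | Q n.+1 s} :=
  let y := constructive_indefinite_description _ (h1 (proj2_sig x)) in
  exist _ (proj1_sig y) (proj2 (proj2_sig y)).
Fixpoint dc_seq n : {s | Q n s} :=
  match n return {s | Q n s} with
  | 0%N => constructive_indefinite_description _ h0
  | m.+1 => dc_step (dc_seq m)
  end.
Lemma dep_choice : exists c : nat -> T, (forall n, Q n (c n)) /\ (forall n, R (c n) (c n.+1)).
Proof.
exists (fun n => proj1_sig (dc_seq n)); split=> [n|n]; first exact: proj2_sig.
rewrite /= /dc_step /=.
exact: (proj1 (proj2_sig (constructive_indefinite_description _ (h1 (proj2_sig (dc_seq n)))))).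
Qed.
End DC.

Section RankDrop.
Variable C : numClosedFieldType.
Lemma rank_drop k (E Q : 'M[C]_k) : E *m E = E -> Q *m Q = Q -> E *m Q = Q *m E ->
  E *m Q <> E -> (\rank (E *m Q) < \rank E)%N.
Proof.
move=> hE hQ hc hne.
have sub : (E *m Q <= E)%MS by rewrite hc submxMl.
have [le1 eq1] := mxrank_leqif_sup sub.
rewrite ltn_neqAle le1 andbT eq1; apply/negP => /submxP [X hX].
apply: hne; by rewrite {1}hX -mulmxA -mulmxA hQ -hX.
Qed.
End RankDrop.
Section Generic2.
Variable C : numClosedFieldType.
Lemma sumP_seq m n (T : Type) (l : seq T) (F : T -> 'M[C]_(m,n)) (P : 'M[C]_(m,n) -> Prop) :
  (forall x, List.In x l -> sumP P (F x)) -> sumP P (\sum_(x <- l) F x).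
Proof.
elim: l => [|x l IH] h; first by rewrite big_nil; exact: sumP0.
rewrite big_cons; apply: sumPD; first by apply: h; left.
by apply: IH => y hy; apply: h; right.
Qed.

Lemma frame_explicit (S : Type) k (K : S -> 'rV[C]_k -> Prop) M : frameP K M ->
  exists n (js : 'I_n -> S) (a b : 'I_n -> 'rV[C]_k),
    (forall i, K (js i) (a i)) /\ (forall i, K (js i) (b i)) /\
    \sum_i hadj (a i) *m b i = M.
Proof.
move=> [N [f [hf ->]]].
pose g t := constructive_indefinite_description _ (hf t).
pose g2 t := constructive_indefinite_description _ (proj2_sig (g t)).
pose g3 t := constructive_indefinite_description _ (proj2_sig (g2 t)).
exists N, (fun t => proj1_sig (g t)), (fun t => proj1_sig (g2 t)), (fun t => proj1_sig (g3 t)).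
split; [|split].
- by move=> t; case: (proj2_sig (g3 t)).
- by move=> t; case: (proj2_sig (g3 t)) => _ [].
- by apply: eq_bigr => t _; case: (proj2_sig (g3 t)) => _ [_ e]; exact: esym e.
Qed.
End Generic2.
Section Sup.
Variable C : numClosedFieldType.
Variables (S : Type) (le : S -> S -> Prop).
Hypothesis Hpo : is_poset le.
Hypothesis Hlub : forall s, increasing_seq le s -> exists x, is_lub le s x.
Variable k : nat.
Variable K : nat -> S -> 'rV[C]_k -> Prop.
Hypothesis Ksub : forall n, subK (K n).
Hypothesis Korth : forall n, orthK (K n).
Variables (fn : nat -> nat) (fjs : forall n, 'I_(fn n) -> S)
  (fa fb : forall n, 'I_(fn n) -> 'rV[C]_k).
Hypotheses (Ha : forall n i, K n (@fjs n i) (@fa n i)) (Hb : forall n i, K n (@fjs n i) (@fb n i)).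
Hypothesis H1 : forall n, \sum_i hadj (@fa n i) *m (@fb n i) = 1%:M.
Hypothesis Hinc : forall n t v, K n.+1 t v -> spanP (K n) (fun s => le s t) v.

Let le_refl : forall x, le x x. Proof. by case: Hpo. Qed.
Let le_trans : forall x y z, le x y -> le y z -> le x z. Proof. by case: Hpo => _ []. Qed.
Let le_anti : forall x y, le x y -> le y x -> x = y. Proof. by case: Hpo => _ []. Qed.

Definition PP n D : 'M[C]_k := Pi (@fjs n) (@fa n) (@fb n) D.

Lemma PP_ext n D D' : (forall s, D s <-> D' s) -> PP n D = PP n D'.
Proof. exact: Pi_ext. Qed.
Lemma PPT n : PP n (fun _ => True) = 1%:M.
Proof. exact: PiT. Qed.
Lemma PPF n : PP n (fun _ => False) = 0.
Proof. exact: PiF. Qed.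
Lemma vPP n s (v : 'rV[C]_k) D : K n s v -> v *m PP n D = if pb (D s) then v else 0.
Proof. rewrite /PP => h; exact: (vPi (@Korth n) (@Ha n) (@H1 n) D h). Qed.
Lemma PPM n D D' : PP n D *m PP n D' = PP n (fun s => D s /\ D' s).
Proof. exact: (PiM (@Korth n) (@Ha n) (@Hb n) (@H1 n)). Qed.
Lemma PPI n D : PP n D *m PP n D = PP n D.
Proof. exact: (PiI (@Korth n) (@Ha n) (@Hb n) (@H1 n)). Qed.
Lemma PPH n D : hadj (PP n D) = PP n D.
Proof. exact: (PiH (@Korth n) (@Ha n) (@Hb n) (@H1 n)). Qed.
Lemma PPC n D : PP n D + PP n (fun s => ~ D s) = 1%:M.
Proof. exact: PiC. Qed.
Lemma PP_group n D (v : 'rV[C]_k) :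
  (forall s, D s -> v *m PP n (fun s' => s' = s) = 0) -> v *m PP n D = 0.
Proof. exact: (Pi_group (@Korth n) (@Ha n) (@Hb n) (@H1 n)). Qed.
Lemma PP_span n D (v : 'rV[C]_k) : v *m PP n D = v <-> spanP (K n) D v.
Proof. exact: (Pi_span (@Ksub n) (@Korth n) (@Ha n) (@Hb n) (@H1 n)). Qed.

Definition down (D : S -> Prop) := forall x y, le x y -> D y -> D x.

Lemma down_le y : down (fun s => le s y).
Proof. by move=> x z hxz hz; apply: le_trans hxz hz. Qed.


Lemma PP_dec n D : down D -> PP n.+1 D = PP n.+1 D *m PP n D.
Proof.
move=> Dd; apply/row_matrixP => i; rewrite row_mul.
set v := row i (PP n.+1 D).
have hv : spanP (K n.+1) D v by apply/PP_span; rewrite /v -row_mul PPI.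
apply: esym; rewrite -[in RHS](mulmx1 v); apply: (span_ext hv) => s x hD hK.
have /PP_span hx := Hinc hK.
rewrite mulmx1 -{1}hx -mulmxA PPM (@PP_ext n _ (fun s' => le s' s)) ?hx // => s'.
by split=> [[]//|h]; split=> //; exact: Dd h hD.
Qed.

Lemma PP_dec_le m n D : down D -> (m <= n)%N -> PP n D = PP n D *m PP m D.
Proof.
move=> Dd; elim: n => [|n IH]; first by rewrite leqn0 => /eqP ->; rewrite PPI.
rewrite leq_eqVlt => /orP [/eqP ->|hm]; first by rewrite PPI.
by rewrite PP_dec // -mulmxA -IH // -PP_dec.
Qed.

Lemma PP_stab D : exists N, down D -> forall n, (N <= n)%N -> PP n D = PP N D.
Proof.
case: (classic (down D)) => Dd; last by exists 0%N.
have hdec : forall n, (\rank (PP n.+1 D) <= \rank (PP n D))%N.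
  by move=> n; rewrite PP_dec //; apply: mxrankS; exact: submxMl.
have [N hN] := @nat_stab (fun n => \rank (PP n D)) hdec.
exists N => _ n hn.
have e1 := PP_dec_le Dd hn.
have sub : (PP n D <= PP N D)%MS by rewrite e1 submxMl.
have [_ eq1] := mxrank_leqif_sup sub.
have : (PP N D <= PP n D)%MS by rewrite -eq1 hN.
move=> /submxP [X hX].
have e2 : PP N D *m PP n D = PP N D by rewrite {1}hX -mulmxA PPI -hX.
by rewrite -[PP N D]PPH -e2 hadjM !PPH -e1.
Qed.

Definition Nof D : nat := proj1_sig (constructive_indefinite_description _ (PP_stab D)).
Definition Pinf D := PP (Nof D) D.

Lemma Pinf_eq D n : down D -> (Nof D <= n)%N -> PP n D = Pinf D.
Proof.
move=> Dd; rewrite /Pinf /Nof.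
case: (constructive_indefinite_description _ (PP_stab D)) => N hN /= hn.
by apply: hN.
Qed.

Lemma Pinf_range D (v : 'rV[C]_k) : down D -> (forall n, v *m PP n D = v) <-> v *m Pinf D = v.
Proof.
move=> Dd; split=> [h|h n]; first exact: h.
case: (leqP (Nof D) n) => hn; first by rewrite Pinf_eq.
transitivity (v *m PP (Nof D) D *m PP n D); first by rewrite -/(Pinf D) h.
by rewrite -mulmxA -(PP_dec_le Dd (ltnW hn)) -/(Pinf D) h.
Qed.

Lemma PinfI D : Pinf D *m Pinf D = Pinf D.
Proof. exact: PPI. Qed.
Lemma PinfH D : hadj (Pinf D) = Pinf D.
Proof. exact: PPH. Qed.

Lemma Pinf_comm D D' : down D -> down D' -> Pinf D *m Pinf D' = Pinf D' *m Pinf D.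
Proof.
move=> Dd Dd'; set n := maxn (Nof D) (Nof D').
rewrite -(@Pinf_eq D n) ?leq_maxl // -(@Pinf_eq D' n) ?leq_maxr // !PPM.
by apply: PP_ext => s; split=> -[].
Qed.

Definition Aset y (v : 'rV[C]_k) := forall n, v *m PP n (fun s => le s y) = v.
Definition Py y := Pinf (fun s => le s y).
Definition Kinf x (v : 'rV[C]_k) :=
  Aset x v /\ forall y, ~ le x y -> forall u, Aset y u -> v *m hadj u = 0.

Lemma Aset_Py y v : Aset y v <-> v *m Py y = v.
Proof. exact: (@Pinf_range (fun s => le s y) v (@down_le y)). Qed.

Lemma PP_kill n D D' (v : 'rV[C]_k) : v *m PP n D = v ->
  (forall s, D s -> D' s -> False) -> v *m PP n D' = 0.
Proof.
move=> hv hDD; rewrite -hv -mulmxA PPM (@PP_ext n _ (fun _ => False)) ?PPF ?mulmx0 //.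
by move=> s; split=> // -[] /hDD h /h.
Qed.

Lemma supp_nonempty n (w : 'rV[C]_k) : w <> 0 -> exists s, w *m PP n (fun s' => s' = s) <> 0.
Proof.
move=> hw; apply: NNPP => hn; apply: hw.
rewrite -[w]mulmx1 -(PPT n); apply: PP_group => s _.
by apply: NNPP => h; apply: hn; exists s.
Qed.

Lemma supp_next n s (w : 'rV[C]_k) : w *m PP n (fun s' => s' = s) <> 0 ->
  exists t, le s t /\ w *m PP n.+1 (fun s' => s' = t) <> 0.
Proof.
move=> hw; apply: NNPP => hn; apply: hw.
have h0 : w *m PP n.+1 (fun t => le s t) = 0.
  apply: PP_group => t hst; apply: NNPP => h; apply: hn; by exists t.
have ew : w = w *m PP n.+1 (fun t => ~ le s t).
  by rewrite -{1}[w]mulmx1 -(PPC n.+1 (fun t => le s t)) mulmxDr h0 add0r.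
have hu : spanP (K n.+1) (fun t => ~ le s t) w by apply/PP_span; rewrite {1}ew -mulmxA PPI -ew.
rewrite -[RHS](mulmx0 _ w); apply: (span_ext hu) => t x ht hx.
rewrite mulmx0; apply: (PP_kill (D := fun s' => le s' t)).
  by apply/PP_span; exact: Hinc.
by move=> s' h1 h2; apply: ht; rewrite -h2.
Qed.

Definition SC (D : S -> Prop) := down D /\
  forall s x, increasing_seq le s -> is_lub le s x -> (forall n, D (s n)) -> D x.

Lemma chain_lub (w : 'rV[C]_k) : w <> 0 -> exists z,
  (forall y, Aset y w -> le z y) /\ w *m Py z <> 0 /\
  (forall D, SC D -> (forall n, w *m PP n D = w) -> D z).
Proof.
move=> hw.
have [c [hc1 hc2]] := @dep_choice S (fun n s => w *m PP n (fun s' => s' = s) <> 0) le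
  (supp_nonempty 0 hw) (fun n s h => supp_next h).
have [z [hz1 hz2]] := Hlub hc2.
have key : forall n D, w *m PP n D = w -> D (c n).
  move=> n D hD; apply: NNPP => hn; apply: (hc1 n); apply: (PP_kill hD).
  by move=> s h1 h2; apply: hn; rewrite -h2.
exists z; split; [|split].
- by move=> y hy; apply: hz2 => n; apply: (key n (fun s => le s y)).
- set N := Nof (fun s => le s z).
  have eP : Py z = PP N (fun s => le s z) by [].
  move=> h0; apply: (hc1 N).
  have -> : PP N (fun s' => s' = c N) = PP N (fun s => le s z) *m PP N (fun s' => s' = c N).
    rewrite PPM; apply: PP_ext => s; split=> [->|[]//]; split=> //; exact: hz1.
  by rewrite mulmxA -eP h0 mul0mx.
- move=> D [Dd Dsc] hD; apply: (Dsc c) => // n; exact: key.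
Qed.

Lemma Py_comm y y' : Py y *m Py y' = Py y' *m Py y.
Proof. exact: Pinf_comm (@down_le y) (@down_le y'). Qed.

Lemma decomp D : SC D -> forall r (E : 'M[C]_k), (\rank E <= r)%N -> E *m E = E -> hadj E = E ->
  (forall y, E *m Py y = Py y *m E) -> E *m Pinf D = E ->
  exists l : seq (S * 'M[C]_k), (forall p, List.In p l -> D p.1 /\
     (forall v, Kinf p.1 (v *m p.2)) /\ p.2 *m p.2 = p.2 /\ hadj p.2 = p.2) /\
     E = \sum_(p <- l) p.2.
Proof.
move=> [Dd Dsc] r; elim: r => [|r IH] E hr hI hH hC hD.
  exists [::]; split=> // ; rewrite big_nil; apply/eqP; rewrite -mxrank_eq0.
  by rewrite -leqn0.
case: (classic (E = 0)) => [->|hE0]; first by exists [::]; rewrite big_nil.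
have prod_ok : forall Q : 'M[C]_k, Q *m Q = Q -> hadj Q = Q -> E *m Q = Q *m E ->
    (forall y, Q *m Py y = Py y *m Q) -> Q *m Pinf D = Pinf D *m Q -> E *m Q <> E ->
    exists l : seq (S * 'M[C]_k), (forall p, List.In p l -> D p.1 /\
     (forall v, Kinf p.1 (v *m p.2)) /\ p.2 *m p.2 = p.2 /\ hadj p.2 = p.2) /\
     E *m Q = \sum_(p <- l) p.2.
  move=> Q hQI hQH hEQ hQy hQD hne; apply: IH.
  - by rewrite -ltnS (leq_trans (rank_drop hI hQI hEQ hne)).
  - by rewrite -mulmxA (mulmxA Q) -hEQ -mulmxA hQI mulmxA hI.
  - by rewrite hadjM hQH hH hEQ.
  - by move=> y; rewrite -mulmxA hQy !mulmxA hC.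
  - by rewrite -mulmxA hQD mulmxA hD.
case: (classic (exists y, E *m Py y <> 0 /\ E *m Py y <> E)) => [[y [hy1 hy2]]|nsplit].
  have hPI : Py y *m Py y = Py y by exact: PinfI.
  have hPH : hadj (Py y) = Py y by exact: PinfH.
  have hPD : Py y *m Pinf D = Pinf D *m Py y by exact: Pinf_comm (@down_le y) Dd.
  have [l1 [hl1 e1]] := prod_ok (Py y) hPI hPH (hC y) (fun y' => Py_comm y y') hPD hy2.
  have hQI : (1%:M - Py y) *m (1%:M - Py y) = 1%:M - Py y.
    by rewrite mulmxBl mul1mx mulmxBr mulmx1 hPI subrr subr0.
  have hQH : hadj (1%:M - Py y) = 1%:M - Py y by rewrite hadjB hadj1 hPH.
  have hEQ : E *m (1%:M - Py y) = (1%:M - Py y) *m E.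
    by rewrite mulmxBr mulmxBl mulmx1 mul1mx hC.
  have hQy : forall y', (1%:M - Py y) *m Py y' = Py y' *m (1%:M - Py y).
    by move=> y'; rewrite mulmxBl mulmxBr mul1mx mulmx1 Py_comm.
  have hQD : (1%:M - Py y) *m Pinf D = Pinf D *m (1%:M - Py y).
    by rewrite mulmxBl mulmxBr mul1mx mulmx1 hPD.
  have hne : E *m (1%:M - Py y) <> E.
    rewrite mulmxBr mulmx1 => h; apply: hy1.
    rewrite -[E *m Py y]opprK; apply/eqP; rewrite oppr_eq0; apply/eqP.
    by apply: (addrI E); rewrite addr0.
  have [l2 [hl2 e2]] := prod_ok _ hQI hQH hEQ hQy hQD hne.
  exists (l1 ++ l2); split.
    by move=> p hp; case: (List.in_app_or _ _ _ hp) => [/hl1|/hl2].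
  by rewrite big_cat /= -e1 -e2 mulmxBr mulmx1 addrC subrK.
have [i hi] : exists i, row i E <> 0.
  apply: NNPP => h; apply: hE0; apply/row_matrixP => i; rewrite row0.
  by apply: NNPP => h'; apply: h; exists i.
have hwE : row i E *m E = row i E by rewrite -row_mul hI.
have [z [hz1 [hz2 hz3]]] := chain_lub hi.
have hyE : forall y, E *m Py y = 0 \/ E *m Py y = E.
  move=> y; case: (classic (E *m Py y = 0)) => h; first by left.
  right; apply: NNPP => h'; apply: nsplit; by exists y.
have hEz : E *m Py z = E.
  case: (hyE z) => // h; exfalso; apply: hz2; by rewrite -hwE -mulmxA h mulmx0.
exists [:: (z, E)]; split; last by rewrite big_cons big_nil addr0.
move=> p [<-|//] /=; split; [|split; [|split=> //]].
  apply: (hz3 D (conj Dd Dsc)).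
  by apply/(Pinf_range _ Dd); rewrite -hwE -mulmxA hD.
move=> v; split.
  by apply/Aset_Py; rewrite -mulmxA hEz.
move=> y hzy u /Aset_Py hu.
rewrite -hu hadjM (PinfH (fun s => le s y)) !mulmxA -(mulmxA v) -/(Py y).
case: (hyE y) => h; first by rewrite h mulmx0 mul0mx.
exfalso; apply: hzy; apply: hz1; apply/Aset_Py.
by rewrite -hwE -mulmxA h.
Qed.

Lemma Kinf_sub : subK Kinf.
Proof.
move=> x; split.
  split; first by move=> n; rewrite mul0mx.
  by move=> y _ u _; rewrite mul0mx.
move=> c u v [hu1 hu2] [hv1 hv2]; split.
  by move=> n; rewrite mulmxDl -scalemxAl hu1 hv1.
by move=> y hy w hw; rewrite mulmxDl -scalemxAl (hu2 y hy w hw) (hv2 y hy w hw) scaler0 addr0.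
Qed.

Lemma Kinf_orth : orthK Kinf.
Proof.
move=> s s' a b ss' [ha1 ha2] [hb1 hb2].
case: (classic (le s' s)) => h; last exact: (hb2 s h a ha1).
have h' : ~ le s s' by move=> h2; apply: ss'; apply: le_anti.
by rewrite -[b *m hadj a]hadjK hadjM hadjK (ha2 s' h' b hb1) hadj0.
Qed.

Lemma SC_T : SC (fun _ => True).
Proof. by split. Qed.

Lemma SC_le t : SC (fun s => le s t).
Proof.
split; first exact: (@down_le t).
by move=> s x _ [_ hx] h; apply: hx.
Qed.

Lemma Aset_mono s t u : le s t -> Aset s u -> Aset t u.
Proof.
move=> hst hu n; rewrite -(hu n) -mulmxA PPM; apply: congr1; apply: PP_ext => s'.
by split=> [[]//|h]; split=> //; apply: le_trans h hst.
Qed.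

Lemma Kinf_span D (v : 'rV[C]_k) : SC D -> (forall n, spanP (K n) D v) -> spanP Kinf D v.
Proof.
move=> [Dd Dsc] hv.
have hvD : v *m Pinf D = v by apply/(Pinf_range _ Dd) => n; apply/PP_span.
have [l [hl e]] := decomp (conj Dd Dsc) (rank_leq_row (Pinf D)) (PinfI D) (PinfH D)
  (fun y => Pinf_comm Dd (@down_le y)) (PinfI D).
rewrite -hvD e mulmx_sumr; apply: sumP_seq => p hp; apply: sumP1.
have [h1 [h2 _]] := hl p hp; by exists p.1.
Qed.

Lemma Kinf_A t (v : 'rV[C]_k) : Aset t v <-> spanP Kinf (fun s => le s t) v.
Proof.
split=> [h|h].
  apply: Kinf_span; first exact: SC_le.
  by move=> n; apply/PP_span; apply: h.
apply: (@sumP_closed _ _ _ (Aset t)).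
- by move=> n; rewrite mul0mx.
- by move=> x y hx hy n; rewrite mulmxDl hx hy.
- by apply: sumP_mono h => x [s [hs [hx _]]]; apply: Aset_mono hs hx.
Qed.

Lemma Kinf_frame : frameP Kinf 1%:M.
Proof.
have hk : (\rank (1%:M : 'M[C]_k) <= k)%N by rewrite mxrank1.
have hc : forall y, 1%:M *m Py y = Py y *m 1%:M by move=> y; rewrite mul1mx mulmx1.
have hd : 1%:M *m Pinf (fun _ => True) = 1%:M by rewrite mul1mx /Pinf PPT.
have [l [hl e]] := decomp SC_T hk (mulmx1 _) (@hadj1 C k) hc hd.
rewrite e; apply: sumP_seq => p hp; have [_ [h2 [h3 h4]]] := hl p hp.
rewrite -h3 -{1}h4 hadj_mul_sum; apply: sumP_big => i _; apply: sumP1.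
by exists p.1, (row i p.2), (row i p.2); rewrite rowE; split.
Qed.

Lemma Kinf_unique (K' : S -> 'rV[C]_k -> Prop) : subK K' -> orthK K' -> frameP K' 1%:M ->
  (forall t v, spanP K' (fun s => le s t) v -> Aset t v) ->
  (forall t v, Aset t v -> spanP K' (fun s => le s t) v) ->
  forall x v, Kinf x v -> K' x v.
Proof.
move=> hsub horth /frame_explicit [n [js [a [b [ha [hb h1]]]]]] h1' h2' x v [hv1 hv2].
have PI := PiI horth ha hb h1; have PH := PiH horth ha hb h1.
have hvx : v *m Pi js a b (fun s => le s x) = v.
  by apply/(Pi_span hsub horth ha hb h1); apply: h2'.
set D2 := fun s => le s x /\ s <> x.
set u := v *m Pi js a b D2.
have ev : v = v *m Pi js a b (fun s => s = x) + u.
  rewrite -{1}hvx -[Pi js a b (fun s => le s x)]mulmx1 -(PiC js h1 (fun s => s = x)).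
  rewrite mulmxDr !(PiM horth ha hb h1) mulmxDr /u /D2; congr (_ + _); congr (_ *m _).
    by apply: (Pi_ext js a b) => s; split=> [[]//|->]; split=> //; exact: le_refl.
have hu : spanP K' D2 u by apply/(Pi_span hsub horth ha hb h1); rewrite /u -mulmxA PI.
have huv : u *m hadj v = 0.
  rewrite -(mulmx0 _ u); apply: (span_ext hu) => s y [hsx nsx] hy.
  have nxs : ~ le x s by move=> hxs; apply: nsx; apply: le_anti.
  have hy' : Aset s y by apply: h1'; apply: sumP1; exists s; split=> //; exact: le_refl.
  by rewrite mulmx0 -[y *m hadj v]hadjK hadjM hadjK (hv2 s nxs y hy') hadj0.
have u0 : u = 0.
  have e : u *m hadj u = u *m hadj v.
    by rewrite /u hadjM PH !mulmxA -(mulmxA v) PI.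
  by apply: rv_norm0; rewrite e huv.
have : spanP K' (fun s => s = x) v.
  by apply/(Pi_span hsub horth ha hb h1); rewrite {2}ev u0 addr0.
move=> hs; apply: (subspace_sumP (hsub x)); apply: sumP_mono hs => y [s [-> h]].
done.
Qed.

End Sup.
Section SupMain.
Variable C : numClosedFieldType.

Lemma frames_choice (S : Type) k (K : nat -> S -> 'rV[C]_k -> Prop) :
  (forall n, frameP (K n) 1%:M) ->
  exists (fn : nat -> nat) (fjs : forall n, 'I_(fn n) -> S) (fa fb : forall n, 'I_(fn n) -> 'rV[C]_k),
    (forall n i, K n (fjs n i) (fa n i)) /\ (forall n i, K n (fjs n i) (fb n i)) /\
    (forall n, \sum_i hadj (fa n i) *m fb n i = 1%:M).
Proof.
move=> h.
pose g n := constructive_indefinite_description _ (frame_explicit (h n)).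
pose g2 n := constructive_indefinite_description _ (proj2_sig (g n)).
pose g3 n := constructive_indefinite_description _ (proj2_sig (g2 n)).
pose g4 n := constructive_indefinite_description _ (proj2_sig (g3 n)).
exists (fun n => proj1_sig (g n)), (fun n => proj1_sig (g2 n)), (fun n => proj1_sig (g3 n)),
  (fun n => proj1_sig (g4 n)).
split; [|split].
- by move=> n i; case: (proj2_sig (g4 n)) => h1 _; exact: h1.
- by move=> n i; case: (proj2_sig (g4 n)) => _ [h1 _]; exact: h1.
- by move=> n; case: (proj2_sig (g4 n)) => _ [_ h1]; exact: h1.
Qed.

Lemma sup_main (S : Type) (le : S -> S -> Prop) : omega_cpo le ->
  forall k (K : nat -> S -> 'rV[C]_k -> Prop),
  (forall n, subK (K n)) -> (forall n, orthK (K n)) -> (forall n, frameP (K n) 1%:M) ->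
  (forall n t v, K n.+1 t v -> spanP (K n) (fun s => le s t) v) ->
  exists Ki : S -> 'rV[C]_k -> Prop,
    subK Ki /\ orthK Ki /\ frameP Ki 1%:M /\
     (forall t v, spanP Ki (fun s => le s t) v <-> forall n, spanP (K n) (fun s => le s t) v) /\
     (forall D, SC le D -> forall v, (forall n, spanP (K n) D v) -> spanP Ki D v) /\
     (forall K', subK K' -> orthK K' -> frameP K' 1%:M ->
        (forall t v, spanP K' (fun s => le s t) v <-> forall n, spanP (K n) (fun s => le s t) v) ->
        forall x v, Ki x v -> K' x v).
Proof.
move=> [Hpo Hlub] k K Ksub Korth Kfr Hinc.
have [fn [fjs [fa [fb [Ha [Hb H1]]]]]] := frames_choice Kfr.
have AsetE : forall t v, Aset le fjs fa fb t v <-> forall n, spanP (K n) (fun s => le s t) v.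
  move=> t v; split=> h n; first by apply/(PP_span Ksub Korth Ha Hb H1); apply: h.
  by apply/(PP_span Ksub Korth Ha Hb H1); apply: h.
exists (Kinf le fjs fa fb); split; [|split; [|split; [|split; [|split]]]].
- exact: Kinf_sub.
- by apply: Kinf_orth; eassumption.
- by apply: Kinf_frame; eassumption.
- move=> t v; rewrite -AsetE; split=> h.
    by apply/Kinf_A; try eassumption.
  by apply/Kinf_A; try eassumption.
- move=> D hD v hv; by apply: Kinf_span; eassumption.
- move=> K' s1 s2 s3 hK'; apply: Kinf_unique; try eassumption.
    by move=> t v /hK' /AsetE.
  by move=> t v /AsetE /hK'.
Qed.
End SupMain.
Section Main1.
Variable C : numClosedFieldType.

Lemma subspace_ext m n (V W : 'M[C]_(m,n) -> Prop) :
  is_subspace V -> (forall x, V x <-> W x) -> is_subspace W.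
Proof.
move=> [h0 hD] e; split; first by apply/e.
by move=> a u v /e hu /e hv; apply/e; apply: hD.
Qed.

Lemma qcomp_ext1 (X Y Z : qset C) (S S' : qrel Y Z) (R : qrel X Y) :
  (forall i j m, S i j m <-> S' i j m) -> forall i k m, qcomp S R i k m <-> qcomp S' R i k m.
Proof.
move=> e i k m; rewrite !qcompE; split; apply: sumP_mono => x [j [r [s [h1 [h2 ->]]]]];
  exists j, r, s; split=> //; split=> //; by apply/e.
Qed.

Lemma qcomp_ext2 (X Y Z : qset C) (S : qrel Y Z) (R R' : qrel X Y) :
  (forall i j m, R i j m <-> R' i j m) -> forall i k m, qcomp S R i k m <-> qcomp S R' i k m.
Proof.
move=> e i k m; rewrite !qcompE; split; apply: sumP_mono => x [j [r [s [h1 [h2 ->]]]]];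
  exists j, r, s; split=> //; by apply/e.
Qed.

Lemma mx11_ne0 (r : 'M[C]_1) : r <> 0 -> r 0 0 != 0.
Proof.
move=> hr; apply/negP => /eqP h; apply: hr; rewrite [r]mx11_scalar h.
by apply/matrixP => i j; rewrite !mxE mul0rn.
Qed.

Lemma one11_ne0 : (1%:M : 'M[C]_1) <> 0.
Proof. by move/matrixP/(_ 0 0); rewrite !mxE /= => /eqP; rewrite oner_eq0. Qed.

Lemma full11 (V : 'M[C]_1 -> Prop) r : is_subspace V -> V r -> r <> 0 -> forall m, V m.
Proof.
move=> hV hr hr0 m; have h := mx11_ne0 hr0.
have -> : m = (m 0 0 / r 0 0) *: r.
  apply/matrixP => i j; rewrite (ord1 i) (ord1 j) !mxE divfK //.
exact: subspaceZ.
Qed.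

Lemma mul11_eq0 (u w : 'M[C]_1) : u *m w = 0 -> w <> 0 -> u = 0.
Proof.
move=> h hw; have := mx11_ne0 hw; move: h => /matrixP /(_ 0 0).
rewrite !mxE big_ord1 => /eqP; rewrite mulf_eq0 => /orP [/eqP hu|/eqP->]; last by rewrite eqxx.
move=> _; by rewrite [u]mx11_scalar hu; apply/matrixP => i j; rewrite !mxE mul0rn.
Qed.

Lemma crel_qrel (S T : Type) (r : S -> T -> Prop) : is_qrel (qcrel C r).
Proof.
move=> s t; split; first by right.
move=> a u v [hu|->] hv; first by left.
case: hv => [hv|->]; first by left.
by right; rewrite scaler0 addr0.
Qed.

Lemma crel_poset (S : Type) (le : S -> S -> Prop) : is_poset le -> qposet (qcrel C le).
Proof.
move=> [hr [ht ha]]; split; first exact: crel_qrel.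
split.
  move=> s t m [->|[e [c ->]]]; first by right.
  by destruct e; left.
split.
  move=> s u m /qcompE hm; case: (classic (le s u)) => h; first by left.
  right; apply: (@sumP_closed _ _ _ (fun x => x = 0)) => //.
    by move=> x y -> ->; rewrite addr0.
  apply: sumP_mono hm => x [j [rr [ss [h1 [h2 ->]]]]].
  case: h1 => [h1|->]; last by rewrite mulmx0.
  case: h2 => [h2|->]; last by rewrite mul0mx.
  by exfalso; apply: h; apply: ht h1 h2.
move=> s t m [h1 h2]; case: (classic (s = t)) => [e|ne].
  destruct e; right; exists erefl, (m 0 0); exact: mx11_scalar.
left; case: h1 => [h1|//]; case: h2 => [h2|]; last exact: hadj_eq0.
by exfalso; apply: ne; apply: ha.
Qed.

Lemma graph_fun (S T : Type) (f : S -> T) : qfun (qcrel C (graph f)).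
Proof.
split; first exact: crel_qrel.
split.
  move=> t t' m /qcompE hm; case: (classic (t = t')) => [e|ne].
    destruct e; right; exists erefl, (m 0 0); exact: mx11_scalar.
  left; apply: (@sumP_closed _ _ _ (fun x => x = 0)) => //.
    by move=> x y -> ->; rewrite addr0.
  apply: sumP_mono hm => x [j [rr [ss [h1 [h2 ->]]]]].
  case: h1 => [h1|h1]; last by rewrite -[rr]hadjK h1 hadj0 mulmx0.
  case: h2 => [h2|->]; last by rewrite mul0mx.
  by exfalso; apply: ne; rewrite -h1 -h2.
move=> s s' m [->|[e [c ->]]]; first by apply/qcompE; exact: sumP0.
destruct e; apply/qcompE; apply: sumP1; exists (f s), (c%:M), 1%:M.
split; first by left.
by split; [left|rewrite mul1mx].
Qed.

Lemma fun_graph (S T : Type) (F : qrel (qclassical C S) (qclassical C T)) :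
  qfun F -> exists f : S -> T, forall s t m, F s t m <-> qcrel C (graph f) s t m.
Proof.
move=> [Fsub [h1 h2]].
have ex : forall s, exists t (r : 'M[C]_1), F s t r /\ r <> 0.
  move=> s; apply: NNPP => hn.
  have : qid (qclassical C S) s s 1%:M by right; exists erefl, 1.
  move=> /h2 /qcompE hm; apply: one11_ne0.
  apply: (@sumP_closed _ _ _ (fun x => x = 0)) => //.
    by move=> x y -> ->; rewrite addr0.
  apply: sumP_mono hm => x [j [rr [ss [hr [hs ->]]]]].
  case: (classic (rr = 0)) => [->|rn]; first by rewrite mulmx0.
  by exfalso; apply: hn; exists j, rr.
pose f s := proj1_sig (constructive_indefinite_description _ (ex s)).
have hf : forall s m, F s (f s) m.
  move=> s m; rewrite /f; case: (constructive_indefinite_description _ (ex s)) => t [r [hr hr0]] /=.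
  exact: full11 (Fsub s t) hr hr0 m.
exists f => s t m; split; last first.
  by case=> [<-|->]; [exact: hf|case: (Fsub s t)].
move=> hm; case: (classic (m = 0)) => [->|m0]; first by right.
left; apply: NNPP => ne; apply: m0.
have : qcomp F (qadj F) (f s) t m.
  apply/qcompE; apply: sumP1; exists s, 1%:M, m; split; last by rewrite mulmx1.
  by rewrite /qadj hadj1; exact: hf.
by move=> /h1 [//|[e _]].
Qed.

Definition pt (S : Type) (x : S) : qrel (qH C 1) (qclassical C S) :=
  fun _ s v => s = x \/ v = 0.
Arguments pt {S} x _ _ _.

Lemma pt_span (S : Type) (x : S) D (v : 'M[C]_1) : spanP (pt x tt) D v <-> D x \/ v = 0.
Proof.
split.
  move=> hv; case: (classic (D x)) => h; first by left.
  right; apply: (@sumP_closed _ _ _ (fun x => x = 0)) => //.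
    by move=> a b -> ->; rewrite addr0.
  apply: sumP_mono hv => y [s [hs [e|->]]] //; by exfalso; apply: h; rewrite -e.
case=> [h|->]; last exact: sumP0.
by apply: sumP1; exists x; split=> //; left.
Qed.

Lemma pt_qrel (S : Type) (x : S) : is_qrel (pt x).
Proof.
move=> [] s; split; first by right.
move=> a u v [hu|->] hv; first by left.
case: hv => [hv|->]; first by left.
by right; rewrite scaler0 addr0.
Qed.

Lemma comp_pt (S T : Type) (r : S -> T -> Prop) (x : S) t (v : 'M[C]_1) :
  qcomp (qcrel C r) (pt x) tt t v <-> r x t \/ v = 0.
Proof. rewrite qcomp_crel; [exact: pt_span|exact: pt_qrel]. Qed.

Lemma pt_fun (S : Type) (x : S) : qfun (pt x).
Proof.
apply/qfunE; split; first exact: pt_qrel.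
split.
  move=> s s' a b ss' [ha|->]; last by rewrite hadj0 mulmx0.
  case=> [hb|->]; last by rewrite mul0mx.
  by exfalso; apply: ss'; rewrite ha hb.
apply: sumP1; exists x, 1%:M, 1%:M; split; first by left.
by split; [left|rewrite hadj1 mulmx1].
Qed.

Lemma fun1_pt (S : Type) (G : qrel (qH C 1) (qclassical C S)) :
  qfun G -> exists x, forall s v, G tt s v <-> pt x tt s v.
Proof.
move=> /qfunE [Gsub [horth hfr]].
have [x [b [hb hb0]]] : exists x (b : 'M[C]_1), G tt x b /\ b <> 0.
  apply: NNPP => hn; apply: one11_ne0.
  apply: (@sumP_closed _ _ _ (fun x => x = 0)) => //.
    by move=> y z -> ->; rewrite addr0.
  apply: sumP_mono hfr => y [s [a [b [ha [hb ->]]]]].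
  case: (classic (b = 0)) => [->|bn]; first by rewrite mulmx0.
  by exfalso; apply: hn; exists s, b.
exists x => s v; split.
  move=> hv; case: (classic (v = 0)) => [->|vn]; first by right.
  left; apply: NNPP => ne; apply: vn.
  apply: mul11_eq0 (horth _ _ _ _ (nesym ne) hb hv) _.
  by move=> /hadj_eq0.
case=> [->|->]; first exact: full11 (Gsub tt x) hb hb0 v.
by case: (Gsub tt s).
Qed.

Lemma pt_incr (S : Type) (le : S -> S -> Prop) (s : nat -> S) :
  increasing_seq le s -> qincreasing (qcrel C le) (fun n => pt (s n)).
Proof.
move=> hs; split=> [n|n]; first exact: pt_fun.
move=> [] t v hv; apply/comp_pt; case: hv => [->|->]; [left; exact: hs|by right].
Qed.

Lemma pt_sup (S : Type) (le : S -> S -> Prop) (s : nat -> S) x :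
  is_poset le -> increasing_seq le s -> is_lub le s x ->
  qsup (qcrel C le) (fun n => pt (s n)) (pt x).
Proof.
move=> [hr [ht _]] hs [hub hl]; split; first exact: pt_incr.
split; first exact: pt_fun.
split=> [] [] t v.
  move=> /comp_pt [h|->] n; apply/comp_pt; last by right.
  by left; apply: ht (hub n) h.
move=> h; apply/comp_pt; case: (classic (v = 0)) => [->|vn]; first by right.
left; apply: hl => n; by case/comp_pt: (h n).
Qed.

End Main1.
Arguments pt {C S} x _ _ _.
Section Main2.
Variable C : numClosedFieldType.

Lemma incr_data d (S : Type) (le : S -> S -> Prop) (K : nat -> qrel (qH C d) (qclassical C S)) :
  qincreasing (qcrel C le) K ->
  (forall n, subK (K n tt)) /\ (forall n, orthK (K n tt)) /\ (forall n, frameP (K n tt) 1%:M) /\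
  (forall n t v, K n.+1 tt t v -> spanP (K n tt) (fun s => le s t) v).
Proof.
move=> [hf hi].
have hF : forall n, is_qrel (K n) /\ orthK (K n tt) /\ frameP (K n tt) 1%:M.
  by move=> n; apply/qfunE.
split; first by move=> n s; case: (hF n) => h _; exact: h.
split; first by move=> n; case: (hF n) => _ [h _].
split; first by move=> n; case: (hF n) => _ [_ h].
move=> n t v hv; have := hi n tt t v hv.
by rewrite qcomp_crel //; case: (hF n).
Qed.

Lemma partA (S : Type) (le : S -> S -> Prop) : omega_cpo le -> qcpo (qcrel C le).
Proof.
move=> hcpo; split; first exact: crel_poset (proj1 hcpo).
move=> d _ K hinc.
have [Ksub [Korth [Kfr Hinc]]] := incr_data hinc.
have [Ki [s1 [s2 [s3 [s4 _]]]]] := sup_main hcpo Ksub Korth Kfr Hinc.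
pose Kinf : qrel (qH C d) (qclassical C S) := fun _ => Ki.
exists Kinf; split=> //.
have Kq : is_qrel Kinf by move=> [] s; exact: s1.
split; first by apply/qfunE.
split=> [] [] t v.
  move=> /(qcomp_crel _ _ _ Kq) /s4 h n.
  by apply/qcomp_crel; [move=> [] s; exact: Ksub|exact: h].
move=> h; apply/(qcomp_crel _ _ _ Kq); apply/s4 => n.
by move: (h n) => /qcomp_crel; apply; move=> [] s; exact: Ksub.
Qed.

Lemma spanP_graph_flat (S T : Type) k (G : S -> 'rV[C]_k -> Prop) (f : S -> T) (P : T -> Prop) v :
  spanP (fun t w => spanP G (fun s => f s = t) w) P v <-> spanP G (fun s => P (f s)) v.
Proof.
split.
  move=> h; apply: sumP_flat; apply: sumP_mono h => w [t [ht hw]].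
  by apply: sumP_mono hw => x [s [e hx]]; exists s; rewrite e.
move=> h; apply: sumP_mono h => x [s [hs hx]]; exists (f s); split=> //.
by apply: sumP1; exists s.
Qed.

Lemma comp_qrel d (S T : Type) (f : S -> T) (G : qrel (qH C d) (qclassical C S)) :
  is_qrel G -> is_qrel (qcomp (qcrel C (graph f)) G).
Proof.
move=> Gs [] t; apply: (subspace_ext (V := spanP (G tt) (fun s => f s = t))).
  apply: sumP_subspace => c x [s [hs hx]]; exists s; split=> //; apply: subspaceZ => //; exact: Gs.
by move=> x; rewrite qcomp_crel.
Qed.

Lemma comp_fun d (S T : Type) (f : S -> T) (G : qrel (qH C d) (qclassical C S)) :
  qfun G -> qfun (qcomp (qcrel C (graph f)) G).
Proof.
move=> /qfunE [Gs [Go Gf]]; apply/qfunE; split; first exact: comp_qrel.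
split.
  move=> t t' a b tt' /(qcomp_crel _ _ _ Gs) ha /(qcomp_crel _ _ _ Gs) hb.
  rewrite -(mulmx0 _ b); apply: (span_ext hb) => s y hs hy.
  rewrite mulmx0 -[y *m hadj a]hadjK hadjM hadjK.
  have -> : a *m hadj y = a *m 0.
    apply: (span_ext ha) => s' z hs' hz; rewrite mulmx0; apply: (Go s s') => //.
    by move=> e; apply: tt'; rewrite -hs -hs' e.
  by rewrite mulmx0 hadj0.
apply: sumP_mono Gf => X [s [a [b [ha [hb ->]]]]].
exists (f s), a, b; split; last split=> //.
  by apply/qcomp_crel => //; apply: sumP1; exists s.
by apply/qcomp_crel => //; apply: sumP1; exists s.
Qed.

Lemma RFG d (S T : Type) (leT : T -> T -> Prop) (f : S -> T) (G : qrel (qH C d) (qclassical C S)) u v :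
  is_qrel G ->
  qcomp (qcrel C leT) (qcomp (qcrel C (graph f)) G) tt u v <-> spanP (G tt) (fun s => leT (f s) u) v.
Proof.
move=> Gs; rewrite qcomp_crel; last exact: comp_qrel.
rewrite -(@spanP_graph_flat _ _ _ (G tt) f (fun t => leT t u)); split; apply: sumP_mono => x [t [ht hx]]; exists t; split=> //.
  by move: hx; rewrite qcomp_crel.
by rewrite qcomp_crel.
Qed.

Lemma partB (S T : Type) (leS : S -> S -> Prop) (leT : T -> T -> Prop) (f : S -> T) :
  omega_cpo leS -> omega_cpo leT -> scott_continuous leS leT f ->
  qscott (qcrel C leS) (qcrel C leT) (qcrel C (graph f)).
Proof.
move=> hS [[hTr [hTt hTa]] _] [fmon flub]; split; first exact: graph_fun.
move=> d _ K Kinf [hinc [hKf hq]].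
have [Ksub [Korth [Kfr Hinc]]] := incr_data hinc.
have [Kis [Kio Kifr]] : is_qrel Kinf /\ orthK (Kinf tt) /\ frameP (Kinf tt) 1%:M by apply/qfunE.
have KiE : forall t v, spanP (Kinf tt) (fun s => leS s t) v <->
    forall n, spanP (K n tt) (fun s => leS s t) v.
  move=> t v; split.
    move=> h n; apply/qcomp_crel; [move=> [] s; exact: Ksub|].
    by apply: (proj1 hq); apply/qcomp_crel.
  move=> h; apply/(qcomp_crel _ _ _ Kis); apply: (proj2 hq) => n.
  by apply/qcomp_crel; [move=> [] s; exact: Ksub|exact: h].
have [Ki [s1 [s2 [s3 [s4 [s5 s6]]]]]] := sup_main hS Ksub Korth Kfr Hinc.
have Kiin : forall x v, Ki x v -> Kinf tt x v.
  by apply: s6 => //; move=> s; exact: Kis.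
have Kq : forall n, is_qrel (K n) by move=> n [] s; exact: Ksub.
split.
  split; first by move=> n; apply: comp_fun; apply/qfunE.
  move=> n [] t v /(qcomp_crel _ _ _ (Kq n.+1)) hv; apply/RFG => //.
  apply: sumP_flat; apply: sumP_mono hv => x [s [hs hx]].
  have := Hinc n s x hx; apply: sumP_mono => y [s' [hs' hy]]; exists s'; split=> //.
  by rewrite -hs; apply: fmon.
split; first by apply: comp_fun; apply/qfunE.
have hD : forall u, SC leS (fun s => leT (f s) u).
  move=> u; split.
    by move=> x y hxy hy; apply: hTt (fmon _ _ hxy) hy.
  move=> s x hs hx hsu; have [_ hl] := flub s x hs hx; exact: hl.
have hDd : forall u n x s, leT (f s) u -> spanP (K n tt) (fun s' => leS s' s) x ->
    spanP (K n tt) (fun s' => leT (f s') u) x.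
  move=> u n x s hsu; apply: sumP_mono => y [s' [hs' hy]]; exists s'; split=> //.
  by apply: hTt (fmon _ _ hs') hsu.
split=> [] [] u v.
  move=> /RFG h n; apply/RFG => //; have {}h := h Kis.
  apply: sumP_flat; apply: sumP_mono h => x [s [hs hx]].
  apply: (hDd u n x s hs); apply: (proj1 (KiE s x)) => //.
  by apply: sumP1; exists s; split; [exact: (proj1 (proj1 hS) s)|exact: hx].
move=> h; apply/RFG => //.
have : spanP Ki (fun s => leT (f s) u) v.
  by apply: s5 => // n; apply/(RFG _ _ _ (Kq n)); exact: h.
by apply: sumP_mono => x [s [hs hx]]; exists s; split=> //; apply: Kiin.
Qed.

End Main2.
Section Main3.
Variable C : numClosedFieldType.

Lemma partC (S : Type) (le : S -> S -> Prop) : is_poset le -> qcpo (qcrel C le) -> omega_cpo le.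
Proof.
move=> hpo [_ hq]; split=> // s hs.
have [Ki [_ [hKf [hq1 hq2]]]] := hq 1%N isT (fun n => pt (s n)) (pt_incr C hs).
have [x hx] := fun1_pt hKf.
have KiE : forall t v, qcomp (qcrel C le) Ki tt t v <-> le x t \/ v = 0.
  have hx' : forall i j m, Ki i j m <-> pt x i j m by move=> [] j m; exact: hx.
  by move=> t v; rewrite (qcomp_ext2 _ hx'); exact: comp_pt.
exists x; split.
  move=> n; have : qcomp (qcrel C le) Ki tt x 1%:M by apply/KiE; left; case: hpo.
  move=> /hq1 /(_ n) /comp_pt [//|h]; exfalso; exact: one11_ne0 h.
move=> y hy; have : qcomp (qcrel C le) Ki tt y 1%:M.
  by apply: hq2 => n; apply/comp_pt; left; exact: hy.
move=> /KiE [//|h]; exfalso; exact: one11_ne0 h.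
Qed.

Lemma part_id (S : Type) : qeq (qcrel C (graph (fun x : S => x))) (qid (qclassical C S)).
Proof.
split=> s t m.
  case=> [e|->]; last by left.
  rewrite /graph in e; destruct e; right; exists erefl, (m 0 0); exact: mx11_scalar.
case=> [->|[e [c ->]]]; first by right.
by destruct e; left.
Qed.

Lemma part_comp (S T U : Type) (f : S -> T) (g : T -> U) :
  qeq (qcrel C (graph (fun x => g (f x)))) (qcomp (qcrel C (graph g)) (qcrel C (graph f))).
Proof.
split=> s u m.
  case=> [e|->]; last by apply/qcompE; exact: sumP0.
  apply/qcompE; apply: sumP1; exists (f s), 1%:M, m; split; first by left.
  by split; [left|rewrite mulmx1].
move=> /qcompE hm; case: (classic (g (f s) = u)) => h; first by left.
right; apply: (@sumP_closed _ _ _ (fun x => x = 0)) => //.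
  by move=> x y -> ->; rewrite addr0.
apply: sumP_mono hm => x [j [rr [ss [h1 [h2 ->]]]]].
case: h1 => [h1|->]; last by rewrite mulmx0.
case: h2 => [h2|->]; last by rewrite mul0mx.
by exfalso; apply: h; rewrite /graph in h1 h2; rewrite h1.
Qed.

Lemma part_faithful (S T : Type) (f g : S -> T) :
  qeq (qcrel C (graph f)) (qcrel C (graph g)) -> f = g.
Proof.
move=> [h1 _]; apply: functional_extensionality => s.
have : qcrel C (graph f) s (f s) 1%:M by left.
move=> /h1 [//|h]; exfalso; exact: one11_ne0 h.
Qed.

Lemma part_full (S T : Type) (leS : S -> S -> Prop) (leT : T -> T -> Prop)
  (F : qrel (qclassical C S) (qclassical C T)) :
  omega_cpo leS -> omega_cpo leT -> qscott (qcrel C leS) (qcrel C leT) F ->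
  exists f : S -> T, scott_continuous leS leT f /\ qeq F (qcrel C (graph f)).
Proof.
move=> [hpoS _] [[hTr _] _] [hFf hsc].
have [f hf] := fun_graph hFf.
have compF : forall x t v, qcomp F (pt x) tt t v <-> pt (f x) tt t v.
  move=> x t v; rewrite (qcomp_ext1 _ hf) comp_pt /graph /pt.
  by split=> -[h|h]; [left|right|left|right].
have compRF : forall x u v,
    qcomp (qcrel C leT) (qcomp F (pt x)) tt u v <-> leT (f x) u \/ v = 0.
  move=> x u v.
  have hx' : forall i j m, qcomp F (pt x) i j m <-> pt (f x) i j m by move=> [] j m; exact: compF.
  by rewrite (qcomp_ext2 _ hx'); exact: comp_pt.
exists f; split; last by split=> s t m h; apply/hf.
have [hrS [htS _]] := hpoS.
split.
  move=> x y hxy.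
  pose s n := if n is 0 then x else y.
  have hs : increasing_seq leS s by case=> [|n] /=.
  have hl : is_lub leS s y.
    split; first by case=> [|n] /=.
    by move=> z hz; exact: (hz 1%N).
  have [[_ hinc] _] := hsc 1%N isT (fun n => pt (s n)) (pt y) (pt_sup C hpoS hs hl).
  have : qcomp F (pt (s 1%N)) tt (f y) 1%:M by apply/compF; left.
  move=> /(hinc 0%N tt) /compRF [//|h]; exfalso; exact: one11_ne0 h.
move=> s x hs hl.
have [_ [_ [hq1 hq2]]] := hsc 1%N isT (fun n => pt (s n)) (pt x) (pt_sup C hpoS hs hl).
split.
  move=> n; have : qcomp (qcrel C leT) (qcomp F (pt x)) tt (f x) 1%:M by apply/compRF; left.
  move=> /hq1 /(_ n) /compRF [//|h]; exfalso; exact: one11_ne0 h.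
move=> y hy; have : qcomp (qcrel C leT) (qcomp F (pt x)) tt y 1%:M.
  by apply: hq2 => n; apply/compRF; left; exact: hy.
move=> /compRF [//|h]; exfalso; exact: one11_ne0 h.
Qed.

End Main3.

Unset Implicit Arguments.

Theorem mainTheorem6 (C : numClosedFieldType) :
  (* (`S, `⊑) is a quantum cpo iff (S, ⊑) is an omega-cpo *)
  (forall (S : Type) (le : S -> S -> Prop), is_poset le ->
     (qcpo (qcrel C le) <-> omega_cpo le)) /\
  (* the functor `(-) : CPO -> qCPO is well defined ... *)
  (forall (S T : Type) (leS : S -> S -> Prop) (leT : T -> T -> Prop) (f : S -> T),
     omega_cpo leS -> omega_cpo leT -> scott_continuous leS leT f ->
     qscott (qcrel C leS) (qcrel C leT) (qcrel C (graph f))) /\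
  (forall (S : Type) (leS : S -> S -> Prop), omega_cpo leS ->
     qeq (qcrel C (graph (fun x : S => x))) (qid (qclassical C S))) /\
  (forall (S T U : Type) (leS : S -> S -> Prop) (leT : T -> T -> Prop)
     (leU : U -> U -> Prop) (f : S -> T) (g : T -> U),
     omega_cpo leS -> omega_cpo leT -> omega_cpo leU ->
     scott_continuous leS leT f -> scott_continuous leT leU g ->
     qeq (qcrel C (graph (fun x => g (f x))))
         (qcomp (qcrel C (graph g)) (qcrel C (graph f)))) /\
  (* ... faithful ... *)
  (forall (S T : Type) (leS : S -> S -> Prop) (leT : T -> T -> Prop) (f g : S -> T),
     omega_cpo leS -> omega_cpo leT ->
     scott_continuous leS leT f -> scott_continuous leS leT g ->
     qeq (qcrel C (graph f)) (qcrel C (graph g)) -> f = g) /\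
  (* ... and full *)
  (forall (S T : Type) (leS : S -> S -> Prop) (leT : T -> T -> Prop)
     (F : qrel (qclassical C S) (qclassical C T)),
     omega_cpo leS -> omega_cpo leT ->
     qscott (qcrel C leS) (qcrel C leT) F ->
     exists f : S -> T, scott_continuous leS leT f /\ qeq F (qcrel C (graph f))).
Proof.
split.
  move=> S le hpo; split; [exact: partC|exact: partA].
split; first by move=> S T leS leT f hS hT hf; exact: partB.
split; first by move=> S leS _; exact: part_id.
split; first by move=> S T U leS leT leU f g *; exact: part_comp.
split; first by move=> S T leS leT f g _ _ _ _; exact: part_faithful.
move=> S T leS leT F hS hT hF; exact: part_full hS hT hF.
Qed.
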